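(* Let $N\ge1$, $0<\lambda\le\Lambda$, assume $\beta=\frac{\Lambda}{\lambda}(N-1)+1>2$, and let $q>\frac{\beta}{\beta-2}$ and $\gamma>\frac{\beta}{\beta-1}$. Let $\delta$ satisfy $\max\{\frac{2}{q-1},\frac{2-\gamma}{\gamma-1}\}<\delta<\beta-2$. Then there exists $K_\delta>0$ such that $v(x)=K_\delta(1+|x|^2)^{-\delta/2}$ is a (positive, non-constant) classical solution of $$\mathcal{M}^+_{\lambda,\Lambda}(D^2v)\ge v^q+|Dv|^\gamma\quad\text{in }\mathbb{R}^N.$$
   Context: For $M\in\mathrm{Sym}_N$ with eigenvalues $e_1,\dots,e_N$, $\mathcal{M}^+_{\lambda,\Lambda}(M)=\sup_{\lambda I_N\le A\le\Lambda I_N}(-\mathrm{Tr}(AM))=-\lambda\sum_{e_k>0}e_k-\Lambda\sum_{e_k<0}e_k$. *)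

(* Defs.v *)
From HB Require Import structures.
From mathcomp Require Import all_boot all_order all_algebra.
From mathcomp Require Import all_classical all_reals all_analysis.
Set Implicit Arguments. Unset Strict Implicit. Unset Printing Implicit Defensive.
Import Order.TTheory GRing.Theory Num.Theory.
Import numFieldNormedType.Exports.
Local Open Scope classical_set_scope.
Local Open Scope ring_scope.

(* Euclidean squared norm and Euclidean norm (the library norm on 'rV is the sup norm). *)
Definition eucl_sq {R : realType} {N : nat} (x : 'rV[R]_N) : R :=
  \sum_(i < N) (x ord0 i) ^+ 2.
Definition eucl {R : realType} {N : nat} (x : 'rV[R]_N) : R := Num.sqrt (eucl_sq x).

Definition qform {R : realType} {N : nat} (A : 'M[R]_N) (x : 'rV[R]_N) : R :=
  (x *m A *m x^T) ord0 ord0.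

Definition ellip_set {R : realType} {N : nat} (lam Lam : R) : set 'M[R]_N :=
  [set A | A^T = A /\ forall x : 'rV[R]_N,
      lam * eucl_sq x <= qform A x /\ qform A x <= Lam * eucl_sq x].

Definition pucci_max {R : realType} {N : nat} (lam Lam : R) (M : 'M[R]_N) : R :=
  sup [set r : R | exists2 A, ellip_set lam Lam A & r = - \tr (A *m M)].

Definition ebase {R : realType} {N : nat} (i : 'I_N) : 'rV[R]_N := delta_mx ord0 i.

Definition partial {R : realType} {N : nat} (i : 'I_N) (f : 'rV[R]_N -> R) : 'rV[R]_N -> R :=
  fun x => ('D_(ebase i) f) x.
Definition grad {R : realType} {N : nat} (f : 'rV[R]_N -> R) (x : 'rV[R]_N) : 'rV[R]_N :=
  \row_(i < N) partial i f x.
Definition hessian {R : realType} {N : nat} (f : 'rV[R]_N -> R) (x : 'rV[R]_N) : 'M[R]_N :=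
  \matrix_(i < N, j < N) partial j (partial i f) x.

Definition C2 {R : realType} {N : nat} (f : 'rV[R]_N -> R) : Prop :=
  (forall x, differentiable f x) /\
  (forall i x, differentiable (partial i f) x) /\
  (forall i j, continuous (partial j (partial i f))).

(* Main.v *)
Require Import Defs.
From HB Require Import structures.
From mathcomp Require Import all_boot all_order all_algebra.
From mathcomp Require Import all_classical all_reals all_analysis.
From mathcomp Require Import ring lra.
Import Order.TTheory GRing.Theory Num.Theory.
Import numFieldNormedType.Exports.
Local Open Scope ring_scope.

Lemma chainD (R : realType) (V : normedModType R) (f : V -> R) (g : R -> R) x w dg :
  differentiable f x -> is_derive (f x) 1 g dg ->
  differentiable (g \o f) x /\ 'D_w (g \o f) x = dg * 'D_w f x.
Proof.
move=> df [dg1 dgv].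
have dg' : differentiable g (f x) by apply/derivable1_diffP.
have dc : differentiable (g \o f) x by exact: differentiable_comp.
split => //.
rewrite deriveE // diff_comp // /= (deriveE _ df) deriv1E // derive1E dgv.
by rewrite mulrC.
Qed.

Lemma Fp_derive (R : realType) (a t : R) : 0 <= t ->
  is_derive t 1 (fun s : R => powR (1 + s) a) (a * powR (1 + t) (a - 1)).
Proof.
move=> t0.
have d1 : differentiable (fun s : R => 1 + s) t.
  by apply: differentiableD => //; apply: differentiable_cst.
have D1 : 'D_1 (fun s : R => 1 + s) t = 1.
  rewrite deriveD ?derive_cst ?derive_id ?add0r //.
have p1 : (0 < 1 + t) by rewrite ltr_pwDl.
have := @chainD R _ (fun s : R => 1 + s) (fun s : R => powR s a) t 1 (a * powR (1 + t) (a - 1)) d1.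
case; first exact: is_derive1_powR.
move=> dc Dc; apply: DeriveDef; first exact: diff_derivable.
by rewrite Dc D1 mulr1.
Qed.

Section S.
Variable R : realType.
Variable N : nat.
Local Notation V := 'rV[R]_N.

Definition coord (i : 'I_N) := fun x : V => x ord0 i.

Lemma coord_diff i x : differentiable (coord i) x.
Proof. exact: differentiable_coord. Qed.

Lemma coord_D i x w : 'D_w (coord i) x = w ord0 i.
Proof.
have @f : {linear V -> R}.
  by exists (fun N : V => N ord0 i); do 2![eexists]; do ?[constructor];
     rewrite ?mxE// => ? *; rewrite ?mxE//; move=> ?; rewrite !mxE.
rewrite (_ : coord i = f) //.
rewrite deriveE; last exact/linear_differentiable/coord_continuous.
by rewrite diff_lin //; exact: coord_continuous.
Qed.

Lemma sq_diff i x : differentiable (fun y : V => coord i y * coord i y) x.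
Proof.
rewrite (_ : (fun y => _) = coord i * coord i) //.
by apply: differentiableM; apply: coord_diff.
Qed.

Lemma sq_D i x w : 'D_w (fun y : V => coord i y * coord i y) x = 2 * x ord0 i * w ord0 i.
Proof.
rewrite (_ : (fun y => _) = coord i * coord i) //.
rewrite deriveM; try exact: diff_derivable (coord_diff _ _).
by rewrite !coord_D /coord /= -mulrA mulr2n mulrDl !mul1r.
Qed.

Lemma es_fun : (eucl_sq : V -> R) = \sum_(i < N) (fun y : V => coord i y * coord i y).
Proof.
rewrite fct_sumE; apply/funext => y; rewrite /eucl_sq.
by apply: eq_bigr => i _; rewrite expr2.
Qed.

Lemma es_diff x : differentiable (eucl_sq : V -> R) x.
Proof. by rewrite es_fun; apply: differentiable_sum => i; apply: sq_diff. Qed.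

Lemma es_D x w : 'D_w (eucl_sq : V -> R) x = \sum_(i < N) 2 * x ord0 i * w ord0 i.
Proof.
rewrite es_fun derive_sum; last by move=> i; exact: diff_derivable (sq_diff _ _).
by apply: eq_bigr => i _; rewrite sq_D.
Qed.

Lemma ebaseE (j i : 'I_N) : (ebase j : V) ord0 i = (i == j)%:R.
Proof. by rewrite /ebase mxE eqxx /= eq_sym. Qed.

Lemma es_De x j : 'D_(ebase j) (eucl_sq : V -> R) x = 2 * x ord0 j.
Proof.
rewrite es_D (bigD1 j) //= big1 ?addr0; first by rewrite ebaseE eqxx mulr1.
by move=> i /negPf ij; rewrite ebaseE ij mulr0.
Qed.

Lemma coord_De i j (x : V) : 'D_(ebase j) (coord i) x = (i == j)%:R.
Proof. by rewrite coord_D ebaseE. Qed.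

Lemma es_ge0 (x : V) : 0 <= eucl_sq x.
Proof. by apply: sumr_ge0 => i _; apply: sqr_ge0. Qed.

Definition G (a : R) := fun x : V => powR (1 + eucl_sq x) a.

Lemma G_all a x w : differentiable (G a) x /\
  'D_w (G a) x = a * powR (1 + eucl_sq x) (a - 1) * 'D_w (eucl_sq : V -> R) x.
Proof.
have := @chainD R _ (eucl_sq : V -> R) (fun s : R => powR (1 + s) a) x w
   (a * powR (1 + eucl_sq x) (a - 1)) (es_diff x) (@Fp_derive R a _ (es_ge0 x)).
by [].
Qed.

Lemma G_diff a x : differentiable (G a) x.
Proof. by case: (G_all a x 0). Qed.

Lemma G_De a x j : 'D_(ebase j) (G a) x = a * G (a - 1) x * (2 * x ord0 j).
Proof. by case: (G_all a x (ebase j)) => _ ->; rewrite es_De. Qed.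

Lemma P_diff c a i x : differentiable (fun y : V => c * (G a y * coord i y)) x.
Proof.
rewrite (_ : (fun y => _) = c *: (G a * coord i)) //.
apply: differentiableZ; apply: differentiableM; [exact: G_diff | exact: coord_diff].
Qed.

Lemma P_De c a i j x : 'D_(ebase j) (fun y : V => c * (G a y * coord i y)) x =
  c * (G a x * (i == j)%:R + x ord0 i * (a * G (a - 1) x * (2 * x ord0 j))).
Proof.
rewrite (_ : (fun y => _) = c *: (G a * coord i)) //.
rewrite deriveZ; last by apply: diff_derivable; apply: differentiableM;
  [exact: G_diff | exact: coord_diff].
rewrite deriveM; try apply: diff_derivable; [|exact: G_diff | exact: coord_diff].
by rewrite G_De coord_De.
Qed.

Definition dot (y z : V) : R := (y *m z^T) ord0 ord0.

Lemma dotE y z : dot y z = \sum_(i < N) y ord0 i * z ord0 i.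
Proof. by rewrite /dot mxE; apply: eq_bigr => i _; rewrite mxE. Qed.

Lemma dotC y z : dot y z = dot z y.
Proof. by rewrite !dotE; apply: eq_bigr => i _; rewrite mulrC. Qed.

Lemma es_dot y : eucl_sq y = dot y y.
Proof. by rewrite dotE; apply: eq_bigr => i _; rewrite expr2. Qed.

Lemma trace_form (A : 'M[R]_N) a b (x : V) :
  \tr (A *m (a%:M + b *: (x^T *m x))) = a * \tr A + b * qform A x.
Proof.
rewrite mulmxDr mul_mx_scalar mxtraceD mxtraceZ -scalemxAr mxtraceZ.
rewrite mulmxA mxtrace_mulC mulmxA /qform /mxtrace big_ord1.
by [].
Qed.

Lemma es_sub (y u : V) t :
  eucl_sq (y - t *: u) = eucl_sq y - 2 * t * dot y u + t ^+ 2 * eucl_sq u.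
Proof.
rewrite dotE /eucl_sq !mulr_sumr -sumrB -big_split /=.
by apply: eq_bigr => i _; rewrite !mxE; ring.
Qed.

Lemma CS (y u : V) : eucl_sq u = 1 -> (dot y u) ^+ 2 <= eucl_sq y.
Proof.
move=> u1; have := es_ge0 (y - dot y u *: u).
rewrite es_sub u1; nra.
Qed.

Lemma es_scale k (y : V) : eucl_sq (k *: y) = k ^+ 2 * eucl_sq y.
Proof.
rewrite /eucl_sq mulr_sumr; apply: eq_bigr => i _; rewrite !mxE; ring.
Qed.

Lemma dot_scale k (y z : V) : dot y (k *: z) = k * dot y z.
Proof.
rewrite !dotE mulr_sumr; apply: eq_bigr => i _; rewrite !mxE; ring.
Qed.

Lemma es_base (i : 'I_N) : eucl_sq (ebase i : V) = 1.
Proof.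
rewrite /eucl_sq (bigD1 i) //= big1 ?addr0; first by rewrite ebaseE eqxx expr1n.
by move=> j /negPf ij; rewrite ebaseE ij expr0n.
Qed.

Lemma unit_dir (x : V) (i0 : 'I_N) : exists u : V, eucl_sq u = 1 /\ (dot x u) ^+ 2 = eucl_sq x.
Proof.
have [e0|en0] := eqVneq (eucl_sq x) 0.
  exists (ebase i0); split; first exact: es_base.
  apply/eqP; rewrite eq_le e0 sqr_ge0 andbT.
  by rewrite -e0; apply: CS; apply: es_base.
have ep : 0 < eucl_sq x by rewrite lt0r en0 es_ge0.
exists ((Num.sqrt (eucl_sq x))^-1 *: x); split.
  by rewrite es_scale exprVn sqr_sqrtr ?es_ge0 // mulVf.
rewrite dot_scale -es_dot exprMn exprVn sqr_sqrtr ?es_ge0 //.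
by rewrite expr2 mulrA mulVf // mul1r.
Qed.

Definition A0 (lam Lam : R) (u : V) : 'M[R]_N := Lam%:M - (Lam - lam) *: (u^T *m u).

Lemma qform_A0 lam Lam u y :
  qform (A0 lam Lam u) y = Lam * eucl_sq y - (Lam - lam) * (dot y u) ^+ 2.
Proof.
rewrite /qform /A0 mulmxBr mul_mx_scalar -scalemxAr mulmxBl -!scalemxAl.
rewrite mulmxA -(mulmxA _ u).
have E : forall (M1 M2 : 'M[R]_1) a b, (a *: M1 - b *: M2) ord0 ord0 = a * M1 ord0 ord0 - b * M2 ord0 ord0.
  by move=> *; rewrite !mxE.
have E2 : forall (M1 M2 : 'M[R]_1), (M1 *m M2) ord0 ord0 = M1 ord0 ord0 * M2 ord0 ord0.
  by move=> *; rewrite !mxE big_ord1.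
rewrite E E2 es_dot -[(u *m y^T) _ _]/(dot u y) dotC expr2.
by [].
Qed.

Lemma A0_ellip lam Lam u : 0 < lam -> lam <= Lam -> eucl_sq u = 1 ->
  ellip_set lam Lam (A0 lam Lam u).
Proof.
move=> l0 lL u1; split.
  by rewrite /A0 linearB /= tr_scalar_mx linearZ /= trmx_mul trmxK.
move=> y; rewrite qform_A0; have := CS y u u1; have := sqr_ge0 (dot y u).
move=> h1 h2; split; nra.
Qed.

Lemma tr_A0 lam Lam u : eucl_sq u = 1 ->
  \tr (A0 lam Lam u) = Lam * N%:R - (Lam - lam).
Proof.
move=> u1; rewrite /A0 linearB /= mxtrace_scalar mxtraceZ mxtrace_mulC.
rewrite /mxtrace big_ord1 -/(dot u u) -es_dot u1 mulr1.
by rewrite mulr_natr.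
Qed.

Lemma qform_base (A : 'M[R]_N) i : qform A (ebase i) = A i i.
Proof.
rewrite /qform /ebase -rowE trmx_delta mxE (bigD1 i) //= big1 ?addr0.
  by rewrite !mxE !eqxx mulr1.
by move=> j /negPf ji; rewrite !mxE ji /= mulr0.
Qed.

Lemma tr_ellip lam Lam (A : 'M[R]_N) : 0 < lam -> ellip_set lam Lam A ->
  0 <= \tr A <= Lam * N%:R.
Proof.
move=> l0 [_ hA].
have -> : \tr A = \sum_(i < N) qform A (ebase i).
  by apply: eq_bigr => i _; rewrite qform_base.
apply/andP; split.
  apply: sumr_ge0 => i _; have [h _] := hA (ebase i); rewrite es_base mulr1 in h.
  by apply: le_trans h; apply: ltW.
rewrite (_ : Lam * N%:R = \sum_(i < N) Lam); last by rewrite sumr_const card_ord mulr_natr.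
apply: ler_sum => i _.
by have [_ h] := hA (ebase i); rewrite es_base mulr1 in h.
Qed.

Lemma v_partial K p i :
  partial i (fun x : V => K * powR (1 + eucl_sq x) p) =
  fun y => (2 * K * p) * (G (p - 1) y * coord i y).
Proof.
apply/funext => x; rewrite /partial.
rewrite (_ : (fun x : V => _) = K *: G p) //.
rewrite deriveZ; last exact/diff_derivable/G_diff.
rewrite G_De /coord -[_ *: _]/(_ * _); ring.
Qed.

Lemma v_hess K p i j x :
  partial j (partial i (fun x : V => K * powR (1 + eucl_sq x) p)) x =
  (2 * K * p) * (G (p - 1) x * (i == j)%:R +
     x ord0 i * ((p - 1) * G (p - 1 - 1) x * (2 * x ord0 j))).
Proof. by rewrite v_partial /partial P_De. Qed.

Lemma hess_cont c a b d i j :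
  continuous (fun x : V => c * (G a x * d + x ord0 i * (b * G (a - 1) x * (2 * x ord0 j)))).
Proof.
move=> x; apply: differentiable_continuous.
rewrite (_ : (fun x : V => _) = cst c * (G a * cst d + coord i * (cst b * G (a - 1) * (cst 2 * coord j)))) //.
have dc : forall k, differentiable (cst k : V -> R) x by move=> k; exact: differentiable_cst.
repeat (apply: differentiableM || apply: differentiableD). all: try apply: G_diff. all: try apply: coord_diff. all: try apply: dc.
Qed.

Lemma hess_eq K p (x : V) :
  hessian (fun x : V => K * powR (1 + eucl_sq x) p) x =
  ((2 * K * p) * G (p - 1) x)%:M +
  ((2 * K * p) * ((p - 1) * G (p - 1 - 1) x * 2)) *: (x^T *m x).
Proof.
apply/matrixP => i j; rewrite !mxE v_hess big_ord1 !mxE.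
case: (i == j) => /=; rewrite ?mulr1n ?mulr0n; ring.
Qed.

Lemma grad_eq K p (x : V) :
  grad (fun x : V => K * powR (1 + eucl_sq x) p) x =
  ((2 * K * p) * G (p - 1) x) *: x.
Proof.
apply/matrixP => i j; rewrite !mxE /partial.
rewrite -/(partial j (fun x : V => K * powR (1 + eucl_sq x) p) x) v_partial.
rewrite /coord (ord1 i); ring.
Qed.

Lemma pucci_lower lam Lam (M : 'M[R]_N) a b (x : V) (i0 : 'I_N) :
  0 < lam -> lam <= Lam -> M = a%:M + b *: (x^T *m x) ->
  - (a * (Lam * N%:R - (Lam - lam)) + b * (lam * eucl_sq x)) <= pucci_max lam Lam M.
Proof.
move=> l0 lL ->.
have [u [u1 xu]] := unit_dir x i0.
have Ae := A0_ellip lam Lam u l0 lL u1.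
have vA : - \tr (A0 lam Lam u *m (a%:M + b *: (x^T *m x))) =
   - (a * (Lam * N%:R - (Lam - lam)) + b * (lam * eucl_sq x)).
  by rewrite trace_form tr_A0 // qform_A0 xu; congr (- (_ + _ * _)); ring.
rewrite -vA; apply: sup_upper_bound; last by exists (A0 lam Lam u).
split; first by exists (- \tr (A0 lam Lam u *m (a%:M + b *: (x^T *m x)))), (A0 lam Lam u).
exists (`|a| * (Lam * N%:R) + `|b| * (Lam * eucl_sq x)) => r [A hA ->].
rewrite trace_form.
have /andP[t0 t1] := tr_ellip lam Lam A l0 hA.
have [_ /(_ x) [q0 q1]] := hA.
have e0 := es_ge0 x.
have q0' : 0 <= qform A x by apply: le_trans q0; apply: mulr_ge0 => //; apply: ltW.
have na := ler_norm (- a); rewrite normrN in na.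
have nb := ler_norm (- b); rewrite normrN in nb.
have ha := normr_ge0 a; have hb := normr_ge0 b.
nra.
Qed.
End S.



Arguments G {R N}.
Arguments G_diff {R N}.
Arguments P_diff {R N}.
Arguments v_partial {R N}.
Arguments v_hess {R N}.
Arguments hess_cont {R N}.
Arguments hess_eq {R N}.
Arguments grad_eq {R N}.
Arguments pucci_lower {R N}.
Arguments es_ge0 {R N}.
Arguments es_scale {R N}.
Arguments es_base {R N}.

Lemma scal1 (R : realType) (b q : R) : 2 < b -> b / (b - 2) < q -> 1 < q.
Proof.
move=> hb hq; apply: lt_trans hq.
rewrite ltr_pdivlMr ?subr_gt0 //; lra.
Qed.

Lemma scal2 (R : realType) (b g : R) : 2 < b -> b / (b - 1) < g -> 1 < g.
Proof.
move=> hb hq; apply: lt_trans hq.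
rewrite ltr_pdivlMr ?subr_gt0 //; lra.
Qed.

Lemma Kchoice (R : realType) (C D q g : R) : 0 < C -> 0 < D -> 1 < q -> 1 < g ->
  exists K : R, 0 < K /\ powR K (q - 1) <= C / 2 /\ D * powR K (g - 1) <= C / 2.
Proof.
move=> C0 D0 q1 g1.
set K1 := powR (C / 2) (1 / (q - 1)).
set K2 := powR (C / (2 * D)) (1 / (g - 1)).
have K10 : 0 < K1 by apply: powR_gt0; lra.
have K20 : 0 < K2 by apply: powR_gt0; apply: divr_gt0 => //; lra.
exists (Num.min K1 K2); split; first by rewrite lt_min K10 K20.
split.
  apply: (le_trans (y := powR K1 (q - 1))).
    apply: ge0_ler_powR; rewrite ?nnegrE; try lra.
      by rewrite le_min !ltW.
    by rewrite ge_min lexx.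
  rewrite /K1 -powRrM mul1r mulVf ?powRr1 //; try lra.
have h : powR (Num.min K1 K2) (g - 1) <= C / (2 * D).
  apply: (le_trans (y := powR K2 (g - 1))).
    apply: ge0_ler_powR; rewrite ?nnegrE; try lra.
      by rewrite le_min !ltW.
    by rewrite ge_min lexx orbT.
  rewrite /K2 -powRrM mul1r mulVf ?powRr1 //.
  - by apply: ltW; apply: divr_gt0 => //; lra.
  - by rewrite gt_eqF // subr_gt0.
apply: le_trans (ler_wpM2l (ltW D0) h) _.
rewrite le_eqVlt; apply/orP; left; apply/eqP; field.
by rewrite gt_eqF.
Qed.

Lemma powRDp (R : realType) (x r s : R) : 0 < x -> powR x (r + s) = powR x r * powR x s.
Proof. by move=> x0; rewrite powRD // (gt_eqF x0) implybT. Qed.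

Lemma point_ineq (R : realType) (N : nat) (lam Lam q gam delta beta K : R) (x : 'rV[R]_N) (i0 : 'I_N) :
  0 < lam -> lam <= Lam -> 0 < delta -> 1 < q -> 1 < gam -> 0 < K ->
  lam * (beta - 2 - delta) = Lam * N%:R - (Lam - lam) - lam * (delta + 2) ->
  0 < beta - 2 - delta ->
  (- (delta / 2)) * q <= - (delta / 2) - 1 ->
  (- (delta / 2) - 1 + 2^-1) * gam <= - (delta / 2) - 1 ->
  powR K (q - 1) <= lam * delta * (beta - 2 - delta) / 2 ->
  powR delta gam * powR K (gam - 1) <= lam * delta * (beta - 2 - delta) / 2 ->
  forall v : 'rV[R]_N -> R, v = (fun x : 'rV[R]_N => K * powR (1 + eucl_sq x) (- (delta / 2))) ->
  powR (v x) q + powR (eucl (grad v x)) gam <= pucci_max lam Lam (hessian v x).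
Proof.
move=> l0 lL d0 q1 g1 K0 hL hb hpq hpg hK1 hK2 v ->.
set p := - (delta / 2) in hpq hpg *.
set C := lam * delta * (beta - 2 - delta) in hK1 hK2.
have s1 : 1 <= 1 + eucl_sq x by rewrite lerDl es_ge0.
have s0 : 0 < 1 + eucl_sq x by apply: lt_le_trans s1.
have S0 : 0 < G (p - 1) x by apply: powR_gt0.
have T0 : 0 <= G (p - 1 - 1) x by apply: powR_ge0.
have TS : G (p - 1 - 1) x * eucl_sq x <= G (p - 1) x.
  have -> : G (p - 1) x = G (p - 1 - 1) x * (1 + eucl_sq x).
    by rewrite /G -{3}(powRr1 (ltW s0)) -powRDp // subrK.
  by apply: ler_wpM2l => //; rewrite lerDr.
have C0 : 0 < C by rewrite /C !mulr_gt0.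
have hp := pucci_lower lam Lam _ _ _ x i0 l0 lL (hess_eq K p x).
apply: le_trans hp.
move: S0 T0 TS; set S := G (p - 1) x; set T := G (p - 1 - 1) x => S0 T0 TS.
have hC : C = delta * (Lam * N%:R - (Lam - lam) - lam * (delta + 2)) by rewrite /C -hL; ring.
have L1 : K * C * S <= - ((2 * K * p * S) * (Lam * N%:R - (Lam - lam)) +
   2 * K * p * ((p - 1) * T * 2) * (lam * eucl_sq x)).
  rewrite -subr_ge0.
  have -> : - ((2 * K * p * S) * (Lam * N%:R - (Lam - lam)) +
   2 * K * p * ((p - 1) * T * 2) * (lam * eucl_sq x)) - K * C * S =
   K * delta * lam * (delta + 2) * (S - T * eucl_sq x).
  by rewrite hC /p; field.
  apply: mulr_ge0; last by rewrite subr_ge0.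
  by rewrite !mulr_ge0 // ?ltW //; apply: addr_gt0.
apply: le_trans L1.
have Kq : forall r, powR K r = K * powR K (r - 1).
  by move=> r; rewrite -[in LHS](subrK 1 r) [in LHS]powRDp // powRr1 ?(ltW K0) // mulrC.
have V1 : powR (K * powR (1 + eucl_sq x) p) q <= K * (C / 2) * S.
  rewrite powRM ?powR_ge0 ?(ltW K0) // -powRrM Kq.
  have h : K `^ (q - 1) * (1 + eucl_sq x) `^ (p * q) <= C / 2 * S.
    apply: ler_pM => //; try exact: powR_ge0.
    by rewrite /S /G; apply: (ler_powR s1 hpq).
  have := ler_wpM2l (ltW K0) h; by rewrite !mulrA.
have V2 : powR (eucl (grad (fun x0 : 'rV_N => K * (1 + eucl_sq x0) `^ p) x)) gam <= K * (C / 2) * S.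
  rewrite grad_eq -/S /eucl es_scale sqrtrM ?sqr_ge0 // sqrtr_sqr.
  have aE : `|2 * K * p * S| = K * delta * S.
    rewrite /p (_ : 2 * K * - (delta / 2) * S = - (K * delta * S)); last by field.
    by rewrite normrN ger0_norm // !mulr_ge0 // ltW.
  rewrite aE.
  have sq : Num.sqrt (eucl_sq x) <= powR (1 + eucl_sq x) 2^-1.
    by rewrite powR12_sqrt ?ler_sqrt ?lerDr ?ltW.
  have e1 : K * delta * S * Num.sqrt (eucl_sq x) <= K * delta * powR (1 + eucl_sq x) (p - 1 + 2^-1).
    rewrite powRDp // -mulrA; apply: ler_wpM2l.
      by rewrite mulr_ge0 ?ltW.
    exact: (ler_wpM2l (ltW S0) sq).
  have e2 := ge0_ler_powR (ltW (lt_trans ltr01 g1)) _ _ e1.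
  rewrite !nnegrE in e2.
  have e3 := e2 (mulr_ge0 (mulr_ge0 (mulr_ge0 (ltW K0) (ltW d0)) (ltW S0)) (sqrtr_ge0 _))
     (mulr_ge0 (mulr_ge0 (ltW K0) (ltW d0)) (powR_ge0 _ _)).
  apply: (le_trans e3).
  have K0' := ltW K0; have d0' := ltW d0.
  rewrite !powRM ?mulr_ge0 ?powR_ge0 // -powRrM Kq.
  have h3 : powR (1 + eucl_sq x) ((p - 1 + 2^-1) * gam) <= S by rewrite /S /G; apply: (ler_powR s1 hpg).
  have h4 : 0 <= powR K (gam - 1) by apply: powR_ge0.
  have h5 : 0 <= powR delta gam by apply: powR_ge0.
  have h6 : 0 <= powR (1 + eucl_sq x) ((p - 1 + 2^-1) * gam) by apply: powR_ge0.
  have h : K `^ (gam - 1) * delta `^ gam * (1 + eucl_sq x) `^ ((p - 1 + 2^-1) * gam) <= C / 2 * S.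
    apply: ler_pM => //; first by rewrite mulr_ge0.
    by rewrite mulrC.
  have := ler_wpM2l (ltW K0) h; by rewrite !mulrA.
lra.
Qed.

Lemma main_aux (R : realType) (N : nat) (lam Lam q gam delta : R) :
  (1 <= N)%N -> 0 < lam -> lam <= Lam ->
  let beta := Lam / lam * (N%:R - 1) + 1 in
  2 < beta ->
  beta / (beta - 2) < q ->
  beta / (beta - 1) < gam ->
  Num.max (2 / (q - 1)) ((2 - gam) / (gam - 1)) < delta ->
  delta < beta - 2 ->
  exists K : R, 0 < K /\
    let v := fun x : 'rV[R]_N => K * powR (1 + eucl_sq x) (- (delta / 2)) in
    C2 v /\
    (forall x, 0 < v x) /\ (exists x y, v x <> v y) /\
    (forall x, powR (v x) q + powR (eucl (grad v x)) gam
               <= pucci_max lam Lam (hessian v x)).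
Proof.
move=> hN l0 lL beta hb hq hg hd hd2.
have q1 := @scal1 R beta q hb hq; have g1 := @scal2 R beta gam hb hg.
move: hd; rewrite gt_max => /andP [hd1 hd3].
have q0 : 0 < q - 1 by rewrite subr_gt0.
have g0 : 0 < gam - 1 by rewrite subr_gt0.
have d0 : 0 < delta by apply: lt_trans hd1; apply: divr_gt0.
move: hd1; rewrite ltr_pdivrMr // => hd1.
move: hd3; rewrite ltr_pdivrMr // => hd3.
have hpq : (- (delta / 2)) * q <= - (delta / 2) - 1 by nra.
have hpg : (- (delta / 2) - 1 + 2^-1) * gam <= - (delta / 2) - 1 by nra.
have hL : lam * (beta - 2 - delta) = Lam * N%:R - (Lam - lam) - lam * (delta + 2).
  by rewrite /beta; field; rewrite gt_eqF.
have hbd : 0 < beta - 2 - delta by rewrite subr_gt0.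
have C0 : 0 < lam * delta * (beta - 2 - delta) by rewrite !mulr_gt0.
have D0 : 0 < powR delta gam by apply: powR_gt0.
have [K [K0 [hK1 hK2]]] := @Kchoice R _ _ q gam C0 D0 q1 g1.
exists K; split => //.
move=> v.
have i0 : 'I_N := Ordinal hN.
split.
  split.
    move=> x; rewrite /v (_ : (fun x0 : 'rV[R]_N => _) = K *: G (- (delta / 2))) //.
    by apply: differentiableZ; apply: G_diff.
  split.
    by move=> i x; rewrite /v v_partial; apply: P_diff.
  move=> i j.
  have E : partial j (partial i v) = fun x : 'rV[R]_N => (2 * K * (- (delta / 2))) *
     (G (- (delta / 2) - 1) x * (i == j)%:R +
     x ord0 i * ((- (delta / 2) - 1) * G (- (delta / 2) - 1 - 1) x * (2 * x ord0 j))).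
    by apply/funext => x; rewrite /v v_hess.
  rewrite E; exact: hess_cont.
split.
  by move=> x; rewrite /v mulr_gt0 // powR_gt0 // ltr_pwDl // es_ge0.
split.
  exists 0, (ebase i0); rewrite /v es_base.
  have -> : eucl_sq (0 : 'rV[R]_N) = 0.
    by rewrite /eucl_sq big1 // => k _; rewrite mxE expr0n.
  rewrite addr0 powR1 => /(mulfI (lt0r_neq0 K0)) /esym /eqP.
  rewrite powR_eq1 => /or3P [| |].
  - by rewrite -subr_eq0 addrK oner_eq0.
  - by rewrite ltNge addr_ge0.
  - by rewrite oppr_eq0 mulf_eq0 invr_eq0 (gt_eqF d0) /= pnatr_eq0.
move=> x.
exact: (@point_ineq R N lam Lam q gam delta beta K x i0 l0 lL d0 q1 g1 K0 hL hbd hpq hpg hK1 hK2 v erefl).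
Qed.


Theorem mainTheorem5 (R : realType) (N : nat) (lam Lam q gam delta : R) :
  (1 <= N)%N -> 0 < lam -> lam <= Lam ->
  let beta := Lam / lam * (N%:R - 1) + 1 in
  2 < beta ->
  beta / (beta - 2) < q ->
  beta / (beta - 1) < gam ->
  Num.max (2 / (q - 1)) ((2 - gam) / (gam - 1)) < delta ->
  delta < beta - 2 ->
  exists K : R, 0 < K /\
    let v := fun x : 'rV[R]_N => K * powR (1 + eucl_sq x) (- (delta / 2)) in
    C2 v /\
    (forall x, 0 < v x) /\ (exists x y, v x <> v y) /\
    (forall x, powR (v x) q + powR (eucl (grad v x)) gam
               <= pucci_max lam Lam (hessian v x)).
Proof. exact: (@main_aux R N lam Lam q gam delta). Qed.
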